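(* Fix an integer $r\ge0$. There is a constant $C_r>0$ depending only on $r$ such that for every $n\ge1$ and every $\theta\in\mathbb{R}^n$, $$\|\theta-P^{(n,r)}\theta\|_\infty\le C_r\,\mathrm{TV}^{(r+1)}(\theta).$$
   Context: $P^{(n,r)}$ is the orthogonal projection matrix in $\mathbb{R}^n$ onto the subspace $\{(p(1/n),p(2/n),\dots,p(n/n)): p\text{ a real polynomial of degree at most } r\}$. For $\theta\in\mathbb{R}^n$: $D^{(1)}\theta=(\theta_2-\theta_1,\dots,\theta_n-\theta_{n-1})$, $D^{(s)}\theta=D^{(1)}(D^{(s-1)}\theta)\in\mathbb{R}^{n-s}$, and $\mathrm{TV}^{(s)}(\theta)=n^{s-1}\|D^{(s)}\theta\|_1$; thus $\mathrm{TV}^{(r+1)}(\theta)=n^{r}\|D^{(r+1)}\theta\|_1$. *)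

(* Defs.v *)
From HB Require Import structures.
From mathcomp Require Import all_boot all_order all_algebra.
From mathcomp Require Import Rstruct.
From Stdlib Require Rdefinitions.
Local Notation R := Rdefinitions.R.

Set Implicit Arguments.
Unset Strict Implicit.
Unset Printing Implicit Defensive.

Import Order.TTheory GRing.Theory Num.Theory.
Local Open Scope ring_scope.

(* Vandermonde-type matrix whose row space is
   { (p(1/n), ..., p(n/n)) : deg p <= r }  (rows = monomials x^0 .. x^r,
   column j (0-based) corresponds to the point (j+1)/n). *)
Definition polyVander (n r : nat) : 'M[R]_(r.+1, n) :=
  \matrix_(i < r.+1, j < n) ((j.+1)%:R / n%:R) ^+ i.

(* Orthogonal projection matrix onto the row space of A (rows viewed as
   vectors of R^n): with B = row_base A (linearly independent rows spanning
   the same space), P = B^T (B B^T)^{-1} B. *)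
Definition orthProj (m n : nat) (A : 'M[R]_(m, n)) : 'M[R]_n :=
  let B := row_base A in (B^T *m invmx (B *m B^T)) *m B.

Definition Pnr (n r : nat) : 'M[R]_n := orthProj (polyVander n r).

(* theta as a sequence indexed from 0 (entry i is theta_{i+1} in the paper) *)
Definition vseq (n : nat) (theta : 'cV[R]_n) (i : nat) : R :=
  match insub i with Some k => theta k 0 | None => 0 end.

Definition D1 (f : nat -> R) : nat -> R := fun i => f i.+1 - f i.
Definition Ds (s : nat) (f : nat -> R) : nat -> R := iter s D1 f.

Definition Dnorm1 (s n : nat) (theta : 'cV[R]_n) : R :=
  \sum_(i < n - s) `|Ds s (vseq theta) i|.

Definition TV (s n : nat) (theta : 'cV[R]_n) : R :=
  (n%:R) ^+ (s.-1) * Dnorm1 s theta.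

Definition supnorm (n : nat) (v : 'cV[R]_n) : R :=
  \big[Num.max/0]_(i < n) `|v i 0|.

(* Main.v *)
Require Import Defs.
From HB Require Import structures.
From mathcomp Require Import all_boot all_order all_algebra.
From mathcomp Require Import Rstruct.
From mathcomp Require Import ring lra zify.
From Stdlib Require Rdefinitions.
Local Notation R := Rdefinitions.R.
Import Order.TTheory GRing.Theory Num.Theory.
Local Open Scope ring_scope.
Lemma sum_widen (F : nat -> R) (a b : nat) : (a <= b)%N -> (forall m, 0 <= F m) ->
  \sum_(m < a) F m <= \sum_(m < b) F m.
Proof.
move=> ab F0; rewrite -!(big_mkord xpredT) (@big_cat_nat _ _ _ a 0 b _ _ (leq0n a) ab) /=.
by rewrite lerDl sumr_ge0.
Qed.

Lemma tele_bound (h : nat -> R) (N : nat) (E : R) : 0 <= E -> h 0%N = 0 ->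
  (forall m, (m.+1 < N)%N -> `|h m.+1 - h m| <= E) ->
  forall j, (j < N)%N -> `|h j| <= N%:R * E.
Proof.
move=> E0 h0 hD j jN.
suff: `|h j| <= j%:R * E.
  move=> H; apply: (le_trans H); apply: ler_wpM2r => //; rewrite ler_nat; lia.
elim: j jN => [|j IH] jN; first by rewrite h0 normr0 mul0r.
have -> : h j.+1 = (h j.+1 - h j) + h j by ring.
have H1 := hD j jN; have H2 := IH (ltnW jN). apply: (le_trans (ler_normD _ _)).
rewrite -natr1 mulrDl mul1r; lra.
Qed.

Lemma DsS s f : Ds s.+1 f = Ds s (D1 f).
Proof. by rewrite /Ds iterSr. Qed.

Lemma taylor (s : nat) : forall (N : nat) (f : nat -> R), exists c : nat -> R,
  forall j, (j < N)%N ->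
  `|f j - \sum_(k < s.+1) c k * ('C(j,k))%:R| <=
     N%:R ^+ s * \sum_(m < N - s.+1) `|Ds s.+1 f m|.
Proof.
elim: s => [|s IH] N f.
  exists (fun _ => f 0%N) => j jN.
  rewrite big_ord1 bin0 mulr1 expr0 mul1r.
  rewrite -(telescope_sumr f (leq0n j)) big_mkord.
  apply: (le_trans (ler_norm_sum _ _ _)).
  apply: (sum_widen (fun m => `|Ds 1 f m|)) => //; lia.
have [c Hc] := IH N.-1 (D1 f).
exists (fun k => if k is k'.+1 then c k' else f 0%N) => j jN.
set E := _ * _.
pose h j := f j - \sum_(k < s.+2) (fun k => if k is k'.+1 then c k' else f 0%N) k * ('C(j,k))%:R.
have hE : forall j, h j = f j - (f 0%N + \sum_(k < s.+1) c k * ('C(j,k.+1))%:R).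
  by move=> i; rewrite /h big_ord_recl /= bin0 mulr1.
rewrite /E exprS -mulrA; change (`|h j| <= N%:R * (N%:R ^+ s * \sum_(m < N - s.+2) `|Ds s.+2 f m|)).
apply: (@tele_bound h N (N%:R ^+ s * \sum_(m < N - s.+2) `|Ds s.+2 f m|)) => //.
- by apply: mulr_ge0; [apply: exprn_ge0 | apply: sumr_ge0].
- rewrite hE; under eq_bigr do rewrite bin0n mulr0; rewrite big1 //; ring.
move=> m mN.
have -> : h m.+1 - h m = D1 f m - \sum_(k < s.+1) c k * ('C(m,k))%:R.
  rewrite !hE /D1.
  have -> : \sum_(k < s.+1) c k * ('C(m.+1,k.+1))%:R =
     \sum_(k < s.+1) c k * ('C(m,k.+1))%:R + \sum_(k < s.+1) c k * ('C(m,k))%:R.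
    by rewrite -big_split /=; apply: eq_bigr => k _; rewrite binS natrD mulrDr.
  ring.
apply: (le_trans (Hc m _)); first lia.
apply: ler_pM.
- exact: exprn_ge0.
- exact: sumr_ge0.
- apply: lerXn2r; rewrite ?nnegrE ?ler_nat //; lia.
rewrite (DsS s.+1) le_eqVlt; apply/orP; left; apply/eqP.
by have -> : (N.-1 - s.+1 = N - s.+2)%N by lia.
Qed.
Lemma binpoly (n k : nat) : (0 < n)%N -> exists Q : {poly R},
  (size Q <= k.+1)%N /\ forall j : nat, ('C(j,k))%:R = Q.[(j.+1)%:R / n%:R].
Proof.
move=> n0; have nz : (n%:R : R) != 0 by rewrite pnatr_eq0 -lt0n.
elim: k => [|k [Q [sQ HQ]]].
  exists 1; split; first by rewrite size_poly1.
  by move=> j; rewrite bin0 hornerC.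
pose L : {poly R} := (n%:R / k.+1%:R) *: ('X - (k.+1%:R / n%:R)%:P).
have sL : (size L <= 2)%N.
  by have := @size_scale_leq R (n%:R / k.+1%:R) ('X - (k.+1%:R / n%:R)%:P); rewrite size_XsubC.
exists (Q * L); split.
  apply: (leq_trans (size_polyMleq _ _)); lia.
move=> j; rewrite hornerM hornerZ hornerXsubC -HQ.
have kz : (k.+1%:R : R) != 0 by rewrite pnatr_eq0.
have -> : 'C(j, k)%:R * (n%:R / k.+1%:R * (j.+1%:R / n%:R - k.+1%:R / n%:R))
   = 'C(j, k)%:R * (j%:R - k%:R) / (k.+1%:R : R).
  rewrite -!natr1; field; rewrite natr1 kz nz //.
have := mul_bin_left j k.
case: (ltnP j k) => jk.
  by rewrite !bin_small // ?mul0r //; lia.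
move=> H; apply: (mulIf kz); rewrite mulrC -natrM H natrM natrB // mulfVK //.
by rewrite mulrC.
Qed.

Definition binP (n k : nat) : {poly R} :=
  \prod_(i < k) ((n%:R / i.+1%:R) *: ('X - (i.+1%:R / n%:R)%:P)).

Lemma binP_spec (n k : nat) : (0 < n)%N ->
  (size (binP n k) <= k.+1)%N /\ forall j : nat, ('C(j,k))%:R = (binP n k).[(j.+1)%:R / n%:R].
Proof.
move=> n0; have nz : (n%:R : R) != 0 by rewrite pnatr_eq0 -lt0n.
elim: k => [|k [sQ HQ]].
  rewrite /binP big_ord0; split; first by rewrite size_poly1.
  by move=> j; rewrite bin0 hornerC.
rewrite /binP big_ord_recr /= -/(binP n k).
pose L : {poly R} := (n%:R / k.+1%:R) *: ('X - (k.+1%:R / n%:R)%:P).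
have sL : (size L <= 2)%N.
  by have := @size_scale_leq R (n%:R / k.+1%:R) ('X - (k.+1%:R / n%:R)%:P); rewrite size_XsubC.
split.
  apply: (leq_trans (size_polyMleq (binP n k) L)); lia.
move=> j; rewrite hornerM hornerZ hornerXsubC -HQ.
have kz : (k.+1%:R : R) != 0 by rewrite pnatr_eq0.
have -> : 'C(j, k)%:R * (n%:R / k.+1%:R * (j.+1%:R / n%:R - k.+1%:R / n%:R))
   = 'C(j, k)%:R * (j%:R - k%:R) / (k.+1%:R : R).
  rewrite -!natr1; field; rewrite natr1 kz nz //.
have := mul_bin_left j k.
case: (ltnP j k) => jk.
  by rewrite !bin_small // ?mul0r //; lia.
move=> H; apply: (mulIf kz); rewrite mulrC -natrM H natrM natrB // mulfVK //.
by rewrite mulrC.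
Qed.
Lemma self_mul_eq0 (n : nat) (u : 'rV[R]_n) : u *m u^T = 0 -> u = 0.
Proof.
move=> H; have := congr1 (fun M : 'M_1 => M 0 0) H; rewrite !mxE /= => H0.
have Hs : \sum_j (u 0 j) ^+ 2 = 0.
  by rewrite -[RHS]H0; apply: eq_bigr => j _; rewrite expr2 mxE.
apply/matrixP => i j; rewrite mxE (ord1 i).
have := psumr_eq0P (P := xpredT) (fun k _ => sqr_ge0 (u 0 k)) Hs (i := j) isT.
by move/eqP; rewrite sqrf_eq0 => /eqP.
Qed.

Lemma unit_BBt (p n : nat) (B : 'M[R]_(p,n)) : row_free B -> B *m B^T \in unitmx.
Proof.
move=> fB; rewrite -row_free_unit -kermx_eq0; apply/rowV0P => v /sub_kermxP H.
have : (v *m B) *m (v *m B)^T = 0.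
  by rewrite trmx_mul mulmxA -(mulmxA v) H mul0mx.
move/self_mul_eq0/eqP; rewrite mulmx_free_eq0 //; exact/eqP.
Qed.

Section ProjB.
Variables (p n : nat) (B : 'M[R]_(p, n)) (fB : row_free B).
Definition Pb := B^T *m invmx (B *m B^T) *m B.
Let uM : B *m B^T \in unitmx := @unit_BBt _ _ B fB.

Lemma Pb_BT : Pb *m B^T = B^T.
Proof. by rewrite /Pb -mulmxA -mulmxA mulVmx // mulmx1. Qed.

Lemma Pb_sym : Pb^T = Pb.
Proof. by rewrite /Pb !trmx_mul trmxK trmx_inv trmx_mul trmxK mulmxA. Qed.

Lemma Pb_idem : Pb *m Pb = Pb.
Proof. by rewrite {2}/Pb !mulmxA Pb_BT. Qed.

Lemma Pb_contr (e : 'cV[R]_n) :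
  \sum_j ((Pb *m e) j 0) ^+ 2 <= \sum_j (e j 0) ^+ 2.
Proof.
set u := Pb *m e.
have Heu : \sum_j e j 0 * u j 0 = \sum_j u j 0 ^+ 2.
  have H : u^T *m u = e^T *m u.
    by rewrite /u trmx_mul Pb_sym -mulmxA (mulmxA Pb) Pb_idem.
  have E1 : (u^T *m u) 0 0 = \sum_j u j 0 ^+ 2.
    by rewrite mxE; apply: eq_bigr => j _; rewrite mxE expr2.
  have E2 : (e^T *m u) 0 0 = \sum_j e j 0 * u j 0.
    by rewrite mxE; apply: eq_bigr => j _; rewrite mxE.
  by rewrite -E1 -E2 H.
have key : \sum_j (e j 0) ^+ 2 - \sum_j u j 0 ^+ 2 =
   \sum_j (e j 0 - u j 0) ^+ 2 + 2 * (\sum_j e j 0 * u j 0 - \sum_j u j 0 ^+ 2).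
  rewrite -!sumrB mulr_sumr -big_split; apply: eq_bigr => j _ /=; ring.
rewrite -subr_ge0 key Heu subrr mulr0 addr0.
by apply: sumr_ge0 => j _; apply: sqr_ge0.
Qed.
End ProjB.
Arguments Pb {p n} B.
Arguments Pb_BT {p n B}.
Arguments Pb_contr {p n B}.

Section Proj.
Variables (m n : nat) (A : 'M[R]_(m, n)).

Lemma orthProjE : orthProj A = Pb (row_base A).
Proof. by []. Qed.

Lemma orthProj_fix : orthProj A *m A^T = A^T.
Proof.
have : (A <= row_base A)%MS by rewrite eq_row_base submx_refl.
case/submxP => D HD; have HAt : A^T = (row_base A)^T *m D^T by rewrite {1}HD trmx_mul.
by rewrite HAt mulmxA orthProjE (Pb_BT (row_base_free A)).
Qed.

Lemma orthProj_range : exists Z : 'M[R]_(m, n), orthProj A = A^T *m Z.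
Proof.
have : (row_base A <= A)%MS by rewrite eq_row_base submx_refl.
case/submxP => D HD; exists (D^T *m invmx (row_base A *m (row_base A)^T) *m row_base A).
rewrite orthProjE /Pb.
have -> : (row_base A)^T = A^T *m D^T by rewrite {1}HD trmx_mul.
by rewrite !mulmxA.
Qed.

Lemma orthProj_contr (e : 'cV[R]_n) :
  \sum_j ((orthProj A *m e) j 0) ^+ 2 <= \sum_j (e j 0) ^+ 2.
Proof. rewrite orthProjE; apply: (Pb_contr (row_base_free A)). Qed.
End Proj.
Lemma lag_eval (s : nat) (t : nat -> R) (Q : {poly R}) y : injective t ->
  (size Q <= s.+1)%N ->
  Q.[y] = \sum_(k < s.+1) Q.[t k] * (tnth (s.+1.-lagrange t) k : {poly R}).[y].
Proof.
move=> it sQ; rewrite {1}(lagrange_gen (ltn0Sn s) it sQ) horner_sum.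
by apply: eq_bigr => k _; rewrite hornerM hornerC.
Qed.

Lemma lag_bound (s : nat) (t : nat -> R) (y c : R) (k : 'I_s.+1) :
  injective t -> 0 < c -> (forall j : 'I_s.+1, `|y - t j| <= 1) ->
  (forall j : 'I_s.+1, j != k -> c <= `|t k - t j|) ->
  `|(tnth (s.+1.-lagrange t) k : {poly R}).[y]| <= c^-1 ^+ s.
Proof.
move=> it c0 Hy Ht; rewrite (lagrangeE (ltn0Sn s) it k) /=.
rewrite hornerM hornerC !horner_prod normrM normrV; last first.
  rewrite unitfE prodf_seq_neq0; apply/allP => j _; apply/implyP => jk.
  rewrite hornerXsubC subr_eq0; apply/eqP => /it /val_inj /eqP; by rewrite eq_sym (negbTE jk).
rewrite !normr_prod.
have P1 : \prod_(j < s.+1 | j != k) `|('X - (t j)%:P).[y]| <= 1.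
  apply: (@le_trans _ _ (\prod_(j < s.+1 | j != k) (1:R))); last by rewrite big1.
  apply: ler_prod => j _; rewrite normr_ge0 hornerXsubC; exact: Hy.
have P2 : c ^+ s <= \prod_(j < s.+1 | j != k) `|('X - (t j)%:P).[t k]|.
  have -> : c ^+ s = \prod_(j < s.+1 | j != k) c.
    by rewrite prodr_const cardC1 card_ord.
  apply: ler_prod => j jk; rewrite (ltW c0) hornerXsubC; exact: Ht.
have cs0 : 0 < c ^+ s by apply: exprn_gt0.
set p1 := \prod_(_ < _ | _) `|_| in P1 *; set p2 := \prod_(_ < _ | _) `|_| in P2 *.
have p20 : 0 < p2 by apply: lt_le_trans P2.
apply: (@le_trans _ _ p2^-1).
  rewrite -[X in _ <= X]mulr1; apply: ler_wpM2l => //; by rewrite invr_ge0 ltW.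
by rewrite exprVn lef_pV2 ?posrE.
Qed.

Lemma reindex (F : nat -> R) (c L n : nat) : (c + L <= n)%N ->
  \sum_(0 <= j < n) (if (c <= j)%N && (j < c + L)%N then F j else 0) =
  \sum_(0 <= a < L) F (a + c)%N.
Proof.
move=> H.
rewrite (@big_cat_nat _ _ _ c 0 n) //=; last lia.
rewrite (@big_cat_nat _ _ _ (c+L) c n) //=; last lia.
rewrite big_nat_cond big1 ?add0r; last first.
  by move=> j /andP[/andP[_ jc] _]; rewrite leqNgt jc.
have -> : \sum_(c + L <= i < n) (if (c <= i < c + L)%N then F i else 0) = 0.
  rewrite big_nat_cond big1 // => j /andP[/andP[jc _] _]; by rewrite ltnNge jc andbF.
rewrite addr0.
have -> : \sum_(c <= j < c + L) (if (c <= j)%N && (j < c + L)%N then F j else 0)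
   = \sum_(0 + c <= j < c + L) F j.
  rewrite add0n big_nat_cond [RHS]big_nat_cond; apply: eq_bigr => j /andP[/andP[h1 h2] _].
  by rewrite h1 h2.
by rewrite big_addn addKn.
Qed.

Definition xn (n j : nat) : R := (j.+1)%:R / n%:R.

Lemma xn01 (n j : nat) : (j < n)%N -> 0 <= xn n j <= 1.
Proof.
move=> jn; have n0 : (0 : R) < n%:R by rewrite ltr0n; lia.
rewrite /xn divr_ge0 ?ler0n //= ler_pdivrMr // mul1r ler_nat //.
Qed.

Lemma dist01 (u v : R) : 0 <= u <= 1 -> 0 <= v <= 1 -> `|u - v| <= 1.
Proof. move=> /andP[u0 u1] /andP[v0 v1]; rewrite ler_norml; apply/andP; split; lra. Qed.

Lemma nat_dist1 (k j : nat) : k != j -> 1 <= `|k%:R - j%:R : R|.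
Proof.
move=> kj; rewrite ler_normr; case: (ltngtP k j) => [kj'|kj'|e]; last by rewrite e eqxx in kj.
  apply/orP; right; rewrite opprB -natrB ?ler1n ?subn_gt0 //; exact: ltnW.
apply/orP; left; rewrite -natrB ?ler1n ?subn_gt0 //; exact: ltnW.
Qed.

Lemma repro (r n i : nat) : (2 * r.+1 <= n)%N -> (i < n)%N ->
  exists w : nat -> R,
    (forall j, `|w j| * n%:R <= 2 * (r.+1)%:R * (4 * r.+1)%:R ^+ r) /\
    forall Q : {poly R}, (size Q <= r.+1)%N ->
      \sum_(0 <= j < n) w j * Q.[xn n j] = Q.[xn n i].
Proof.
move=> dn iN.
set h := (n %/ (2 * r.+1))%N.
have h0 : (0 < h)%N by rewrite divn_gt0.
have hd : (h * (2 * r.+1) <= n)%N by apply: leq_divM.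
have hn : (n < h.+1 * (2 * r.+1))%N by apply: ltn_ceil.
set L := (n - r * h)%N.
have L0 : (0 < L)%N by rewrite /L; nia.
have nL : (n <= 2 * L)%N by rewrite /L; nia.
have nh : (n <= 4 * r.+1 * h)%N by nia.
have nR : (0 : R) < n%:R by rewrite ltr0n; lia.
have hR : (0 : R) < h%:R by rewrite ltr0n.
have LR : (0 : R) < L%:R by rewrite ltr0n.
pose t a := fun k => xn n (a + k * h).
have tinj : forall a, injective (t a).
  have nz : (n%:R : R)^-1 != 0 by rewrite invr_eq0 gt_eqF.
  move=> a u v; rewrite /t /xn => /(mulIf nz)/eqP.
  rewrite eqr_nat eqSS eqn_add2l eqn_pmul2r // => /eqP //.
pose ell a (k : 'I_r.+1) := (tnth (r.+1.-lagrange (t a)) k : {poly R}).[xn n i].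
pose Lam := ((4 * r.+1)%:R : R) ^+ r.
have Lam0 : 0 <= Lam by rewrite exprn_ge0.
have ellB : forall a k, (a < L)%N -> `|ell a k| <= Lam.
  move=> a k aL.
  apply: le_trans (_ : (h%:R / n%:R)^-1 ^+ r <= _).
    apply: lag_bound => //.
    - by apply: divr_gt0.
    - move=> j; apply: dist01; apply: xn01 => //.
      have := ltn_ord j; rewrite /L in aL; nia.
    - move=> j jk; rewrite /t /xn -mulrBl normrM normfV [`|n%:R|]ger0_norm ?ler0n //.
      rewrite ler_pM2r ?invr_gt0 // -!natr1 !natrD.
      have -> : a%:R + (k * h)%:R + 1 - (a%:R + (j * h)%:R + 1) = (k%:R - j%:R) * (h%:R : R).
        by rewrite !natrM; ring.
      rewrite normrM (ger0_norm (ltW hR)) -{1}[h%:R]mul1r ler_pM2r //.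
      by apply: nat_dist1; rewrite eq_sym.
  rewrite invf_div; apply: lerXn2r; rewrite ?nnegrE ?divr_ge0 ?ler0n //.
  by rewrite ler_pdivrMr // -natrM ler_nat.
pose w j := L%:R^-1 * \sum_(k < r.+1)
   (if ((k * h) <= j)%N && (j < k * h + L)%N then ell (j - k * h)%N k else 0).
exists w; split.
  move=> j; rewrite /w normrM normfV (ger0_norm (ltW LR)).
  apply: le_trans (_ : L%:R^-1 * (r.+1%:R * Lam) * n%:R <= _).
    rewrite ler_pM2r // ler_pM2l ?invr_gt0 //.
    apply: le_trans (ler_norm_sum _ _ _) _.
    apply: le_trans (_ : \sum_(k < r.+1) Lam <= _); last by rewrite sumr_const card_ord mulr_natl.
    apply: ler_sum => k _; case: ifP => [/andP[h1 h2]|_]; last by rewrite normr0.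
    apply: ellB; lia.
  have -> : L%:R^-1 * (r.+1%:R * Lam) * n%:R = (n%:R / L%:R) * (r.+1%:R * Lam) by ring.
  have -> : 2 * r.+1%:R * (4 * r.+1)%:R ^+ r = 2 * (r.+1%:R * Lam) by rewrite /Lam mulrA.
  apply: ler_wpM2r; first by rewrite mulr_ge0 ?ler0n.
  rewrite ler_pdivrMr //; have : (n%:R : R) <= (2 * L)%:R by rewrite ler_nat.
  by rewrite natrM mulrC.
move=> Q sQ.
rewrite /w.
under eq_bigr do rewrite -mulrA mulr_suml.
rewrite -mulr_sumr exchange_big /=.
under eq_bigr => k _.
  rewrite (eq_bigr (fun j => if ((k * h) <= j)%N && (j < k * h + L)%N then
        ell (j - k * h)%N k * Q.[xn n j] else 0)); last first.
    by move=> j _; case: ifP => _; rewrite ?mul0r.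
  rewrite (@reindex (fun j => ell (j - k * h)%N k * Q.[xn n j]) (k * h) L n); last first.
    have := ltn_ord k; rewrite /L; nia.
  over.
rewrite /= exchange_big /=.
under eq_bigr => a _.
  under eq_bigr => k _ do rewrite addnK mulrC.
  rewrite -(@lag_eval r (t a) Q (xn n i) (tinj a) sQ).
  over.
rewrite /= sumr_const_nat subn0 -mulr_natr. field. by rewrite gt_eqF.
Qed.

Lemma vseqE (n : nat) (theta : 'cV[R]_n) (j : 'I_n) : vseq theta j = theta j 0.
Proof. by rewrite /vseq valK. Qed.

Lemma vander_col (n r : nat) (g : 'cV[R]_r.+1) (j : 'I_n) :
  ((polyVander n r)^T *m g) j 0 = \sum_(k < r.+1) g k 0 * xn n j ^+ k.
Proof. by rewrite mxE; apply: eq_bigr => k _; rewrite !mxE mulrC. Qed.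

Lemma colpoly (r : nat) (g : 'cV[R]_r.+1) : exists U : {poly R},
  (size U <= r.+1)%N /\ forall x, U.[x] = \sum_(k < r.+1) g k 0 * x ^+ k.
Proof.
exists (\sum_(k < r.+1) g k 0 *: 'X^k); split.
  apply: (big_ind (fun p : {poly R} => (size p <= r.+1)%N)).
  - by rewrite size_poly0.
  - by move=> p q sp sq; apply: (leq_trans (size_polyD _ _)); rewrite geq_max sp sq.
  - move=> k _; apply: (leq_trans (size_scale_leq _ _)); by rewrite size_polyXn.
by move=> x; rewrite horner_sum; apply: eq_bigr => k _; rewrite hornerZ hornerXn.
Qed.

Lemma sum_abs_bound (n : nat) (u : 'I_n -> R) (M : R) : 0 <= M ->
  \sum_j u j ^+ 2 <= n%:R * M ^+ 2 -> \sum_j `|u j| <= n%:R * M.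
Proof.
move=> M0 Hs; case: (eqVneq M 0) => [M00|Mn0].
  rewrite M00 mulr0 le_eqVlt; apply/orP; left; apply/eqP.
  have H0 : \sum_j u j ^+ 2 = 0.
    apply/eqP; rewrite eq_le; apply/andP; split.
      by move: Hs; rewrite M00 expr0n /= mulr0.
    by apply: sumr_ge0 => j _; apply: sqr_ge0.
  apply: big1 => j _.
  have := psumr_eq0P (P := xpredT) (fun k _ => sqr_ge0 (u k)) H0 (i := j) isT.
  by move/eqP; rewrite sqrf_eq0 => /eqP ->; rewrite normr0.
have Mp : 0 < M by rewrite lt0r Mn0.
have H1 : \sum_j (2 * M) * `|u j| <= \sum_j (u j ^+ 2 + M ^+ 2).
  apply: ler_sum => j _.
  have := sqr_ge0 (`|u j| - M); rewrite -(real_normK (num_real (u j))).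
  move=> H; nra.
move: H1; rewrite -mulr_sumr big_split /= sumr_const card_ord -mulr_natl => H1.
have : 2 * M * \sum_j `|u j| <= 2 * M * (n%:R * M) by nra.
by rewrite ler_pM2l // mulr_gt0.
Qed.

Theorem lemma11 (r : nat) :
  exists C : R, 0 < C /\
    forall (n : nat) (theta : 'cV[R]_n), (1 <= n)%N ->
      supnorm (theta - Pnr n r *m theta) <= C * TV r.+1 theta.
Proof.
pose K : R := (2 * r.+1)%:R + 2 * (r.+1)%:R * (4 * r.+1)%:R ^+ r.
have K0 : 0 <= K by rewrite addr_ge0 ?ler0n // !mulr_ge0 ?ler0n ?exprn_ge0 ?ler0n.
exists (1 + K); split; first by lra.
move=> n theta n1.
set M := TV r.+1 theta.
have M0 : 0 <= M by rewrite /M /TV mulr_ge0 ?exprn_ge0 ?ler0n // sumr_ge0.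
set A := polyVander n r.
have [c Hc] := taylor r n (vseq theta).
pose G : {poly R} := \sum_(k < r.+1) c k *: binP n k.
have sG : (size G <= r.+1)%N.
  apply: (big_ind (fun p : {poly R} => (size p <= r.+1)%N)).
  - by rewrite size_poly0.
  - by move=> p q sp sq; apply: (leq_trans (size_polyD _ _)); rewrite geq_max sp sq.
  - move=> k _; apply: (leq_trans (size_scale_leq _ _)).
    have [sb _] := binP_spec n k n1; apply: (leq_trans sb); exact: ltn_ord.
pose gam : 'cV[R]_r.+1 := \col_k G`_k.
set g := A^T *m gam.
have gE : forall j : 'I_n, g j 0 = \sum_(k < r.+1) c k * ('C(j,k))%:R.
  move=> j; rewrite /g vander_col.
  transitivity G.[xn n j].
    by rewrite (horner_coef_wide _ sG); apply: eq_bigr => k _; rewrite mxE.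
  rewrite /G horner_sum; apply: eq_bigr => k _; rewrite hornerZ.
  by have [_ ->] := binP_spec n k n1.
set e := theta - g.
have eB : forall j : 'I_n, `|e j 0| <= M.
  move=> j; have -> : e j 0 = theta j 0 - g j 0 by rewrite /e mxE [(- g) j 0]mxE.
  rewrite gE -vseqE; exact: Hc.
have Pg : Pnr n r *m g = g by rewrite /g mulmxA /Pnr orthProj_fix.
have -> : theta - Pnr n r *m theta = e - Pnr n r *m e.
  by rewrite /e mulmxBr Pg; rewrite opprB addrA addrNK.
set u := Pnr n r *m e.
have [Z HZ] := @orthProj_range _ _ A.
have [U [sU HU]] := @colpoly r (Z *m e).
have uE : forall j : 'I_n, u j 0 = U.[xn n j].
  by move=> j; rewrite /u /Pnr -/A HZ -mulmxA vander_col HU.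
have u2 : \sum_j u j 0 ^+ 2 <= n%:R * M ^+ 2.
  apply: le_trans (@orthProj_contr _ _ A e) _.
  apply: le_trans (_ : \sum_(j < n) M ^+ 2 <= _); last by rewrite sumr_const card_ord mulr_natl.
  apply: ler_sum => j _; rewrite -(real_normK (num_real (e j 0))).
  by apply: lerXn2r; rewrite ?nnegrE ?normr_ge0.
have u1 := @sum_abs_bound n (fun j => u j 0) M M0 u2.
have uB : forall i : 'I_n, `|u i 0| <= K * M.
  move=> i; case: (ltnP n (2 * r.+1)) => [nsmall|nbig].
    apply: le_trans (_ : n%:R * M <= _); last first.
      apply: ler_wpM2r => //; apply: le_trans (_ : (2 * r.+1)%:R <= _).
        by rewrite ler_nat ltnW.
      by rewrite lerDl !mulr_ge0 ?ler0n ?exprn_ge0 ?ler0n.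
    apply: le_trans u1.
    by rewrite (bigD1 i) //= lerDl sumr_ge0.
  have [w [wB wR]] := @repro r n i nbig (ltn_ord i).
  rewrite uE -(wR U sU) big_mkord.
  apply: le_trans (ler_norm_sum _ _ _) _.
  apply: le_trans (_ : \sum_(j < n) (2 * (r.+1)%:R * (4 * r.+1)%:R ^+ r / n%:R) * `|u j 0| <= _).
    apply: ler_sum => j _; rewrite normrM -uE; apply: ler_wpM2r => //.
    by rewrite ler_pdivlMr ?ltr0n.
  rewrite -mulr_sumr.
  apply: le_trans (_ : 2 * (r.+1)%:R * (4 * r.+1)%:R ^+ r / n%:R * (n%:R * M) <= _).
    by apply: ler_wpM2l => //; rewrite divr_ge0 ?ler0n // !mulr_ge0 ?ler0n ?exprn_ge0 ?ler0n.
  rewrite mulrA divfK ?pnatr_eq0 -?lt0n //.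
  by apply: ler_wpM2r => //; rewrite lerDr ler0n.
rewrite /supnorm; apply: bigmax_le; first by rewrite mulr_ge0 // addr_ge0.
move=> i _; rewrite mxE [(- u) i 0]mxE.
apply: le_trans (ler_normB _ _) _.
rewrite mulrDl mul1r; apply: lerD; [exact: eB | exact: uB].
Qed.
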